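(* Let $\mathcal T$ be a locally finite tessellation of ${\mathbb X}$ and $x\in{\mathbb X}$. Let $C=\bigcap_{T\in\mathcal T,\,x\in T}T$. Then $C$ is a cell of $\mathcal T$ and $x\in C^r$.
   Context: ${\mathbb X}$ is $\mathbb R^n$, the unit sphere $\mathbb S^n$, or hyperbolic $n$-space. A hyperplane is a complete totally geodesic submanifold of codimension 1; closed half-spaces are the closures of the two components of its complement. A polyhedron is a nonempty intersection of a family of closed half-spaces whose boundary hyperplanes form a locally finite family; its relative interior $C^r$ is its interior in the smallest complete totally geodesic submanifold containing it; it is thick if it has nonempty interior in ${\mathbb X}$. A tessellation is a set of thick polyhedra (tiles) covering ${\mathbb X}$ with pairwise disjoint interiors; locally finite means every compact set meets only finitely many tiles. A cell of $\mathcal T$ is a nonempty intersection $C$ of tiles such that for every tile $T$ either $C\subseteq T$ or $C^r\cap T=\emptyset$. *)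

(* Defs.v *)
From HB Require Import structures.
From mathcomp Require Import all_boot all_order all_algebra.
From mathcomp Require Import all_classical all_reals all_analysis.
Set Implicit Arguments. Unset Strict Implicit. Unset Printing Implicit Defensive.
Import Order.TTheory GRing.Theory Num.Theory.
Import numFieldNormedType.Exports.
Local Open Scope classical_set_scope.
Local Open Scope ring_scope.

(* The three model geometries, all realised inside R^(n+1) = 'rV[R]_(n.+1):
   - Euclid     : R^n        = { x | x_n = 1 }                (affine chart)
   - Sphere     : S^n        = { x | sum_i x_i^2 = 1 }
   - Hyperbolic : H^n        = { x | sum_(i<n) x_i^2 - x_n^2 = -1, x_n > 0 }
     (hyperboloid model).
   In each of these models the complete totally geodesic submanifolds are
   exactly the nonempty sets  X ∩ L  with L a linear subspace of R^(n+1)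
   (of dimension dim + 1), and the topology is the one induced by R^(n+1). *)
Inductive geometry := Euclid | Sphere | Hyperbolic.

Section Geom.
Variables (R : realType) (n : nat).
Local Notation V := 'rV[R]_(n.+1).

Definition dotp (u x : V) : R := \sum_(i < n.+1) u ord0 i * x ord0 i.

Definition Xspace (g : geometry) : set V :=
  match g with
  | Euclid => [set x | x ord0 ord_max = 1]
  | Sphere => [set x | \sum_(i < n.+1) x ord0 i ^+ 2 = 1]
  | Hyperbolic => [set x | \sum_(i < n.+1 | i != ord_max) x ord0 i ^+ 2
                            - x ord0 ord_max ^+ 2 = -1 /\ 0 < x ord0 ord_max]
  end.

Definition tg_submanifold (g : geometry) (M : set V) : Prop :=
  exists L : {vspace V}, M = Xspace g `&` [set x | x \in L] /\ M !=set0.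

Definition hyperplane (g : geometry) (H : set V) : Prop :=
  exists L : {vspace V}, \dim L = n /\
    H = Xspace g `&` [set x | x \in L] /\ H !=set0.

(* The hyperplane { x in X | <u,x> = 0 } (u <> 0) and the closures of the two
   components of its complement, { x in X | <u,x> >= 0 } and
   { x in X | <u,x> <= 0 } = { x in X | <-u,x> >= 0 }. *)
Definition hyp_of (g : geometry) (u : V) : set V :=
  Xspace g `&` [set x | dotp u x = 0].
Definition halfspace_of (g : geometry) (u : V) : set V :=
  Xspace g `&` [set x | 0 <= dotp u x].

Definition closed_halfspace (g : geometry) (S H : set V) : Prop :=
  hyperplane g H /\
  exists u : V, u != 0 /\ hyp_of g u !=set0 /\
    S = halfspace_of g u /\ H = hyp_of g u.

Definition locally_finite_family (g : geometry) (F : set (set V)) : Prop :=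
  forall x, Xspace g x -> exists e : R, 0 < e /\
    finite_set [set H | F H /\ (H `&` ball x e) !=set0].

Definition polyhedron (g : geometry) (P : set V) : Prop :=
  exists F : set (set V),
    (forall S, F S -> exists H, closed_halfspace g S H) /\
    locally_finite_family g
      [set H | exists2 S, F S & closed_halfspace g S H] /\
    P = Xspace g `&` \bigcap_(S in F) S /\
    P !=set0.

Definition interior_in (M A : set V) : set V :=
  [set a | A a /\ exists e : R, 0 < e /\ (ball a e `&` M) `<=` A].

Definition tg_hull (g : geometry) (C : set V) : set V :=
  [set p | Xspace g p /\ forall M, tg_submanifold g M -> C `<=` M -> M p].

Definition rel_interior (g : geometry) (C : set V) : set V :=
  interior_in (tg_hull g C) C.

Definition thick (g : geometry) (P : set V) : Prop :=
  interior_in (Xspace g) P !=set0.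

Definition tessellation (g : geometry) (T : set (set V)) : Prop :=
  (forall t, T t -> polyhedron g t /\ thick g t) /\
  (forall x, Xspace g x -> exists2 t, T t & t x) /\
  (forall t1 t2, T t1 -> T t2 -> t1 <> t2 ->
     interior_in (Xspace g) t1 `&` interior_in (Xspace g) t2 = set0).

Definition locally_finite_tess (g : geometry) (T : set (set V)) : Prop :=
  forall K : set V, K `<=` Xspace g -> compact K ->
    finite_set [set t | T t /\ (t `&` K) !=set0].

Definition cell (g : geometry) (T : set (set V)) (C : set V) : Prop :=
  (exists F : set (set V), F `<=` T /\ F !=set0 /\ C = \bigcap_(t in F) t) /\
  C !=set0 /\
  (forall t, T t -> C `<=` t \/ rel_interior g C `&` t = set0).

End Geom.

(* Main.v *)
Require Import Defs.
From HB Require Import structures.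
From mathcomp Require Import all_boot all_order all_algebra.
From mathcomp Require Import all_classical all_reals all_analysis.
From mathcomp Require Import ring lra.
From Stdlib Require Import Classical_Prop.
Set Implicit Arguments. Unset Strict Implicit. Unset Printing Implicit Defensive.
Import Order.TTheory GRing.Theory Num.Theory.
Import numFieldNormedType.Exports. Import Num.Def.
Local Open Scope classical_set_scope.
Local Open Scope ring_scope.
Record GD (R : realType) (V : normedModType R) (X : set V) := MkGD {
  gD : set V;
  gnz : V -> V;
  gkap : V -> R;
  gD_open : forall v, gD v -> exists2 d, 0 < d & forall w, `|v - w| < d -> gD w;
  gXD : forall v, X v -> gD v;
  gkap_pos : forall v, gD v -> 0 < gkap v;
  gnzE : forall v, gD v -> gnz v = (gkap v)^-1 *: v;
  gnzX : forall v, gD v -> X (gnz v);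
  gnz_id : forall v, X v -> gnz v = v;
  gDscale : forall v l, gD v -> 0 < l -> gD (l *: v);
  gnz_scale : forall v l, gD v -> 0 < l -> gnz (l *: v) = gnz v;
  gnz_cont : forall v, gD v -> forall e, 0 < e -> exists2 d, 0 < d &
     forall w, `|v - w| < d -> `|gnz v - gnz w| < e
}.

Definition cone (R : realType) (V : normedModType R) (P : set V) :=
  (forall a b, P a -> P b -> P (a + b)) /\ (forall l a, 0 < l -> P a -> P (l *: a)).

Definition intX (R : realType) (V : normedModType R) (X A : set V) (a : V) :=
  A a /\ exists2 e, 0 < e & forall w, `|a - w| < e -> X w -> A w.

Lemma gnz_inv (R : realType) (V : normedModType R) (X : set V) (G : GD X) v :
  gD G v -> v = gkap G v *: gnz G v.
Proof.
move=> Dv; rewrite gnzE // scalerA mulfV ?scale1r //.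
by rewrite gt_eqF // gkap_pos.
Qed.

Lemma intcone (R : realType) (V : normedModType R) (X : set V) (G : GD X)
  (t P : set V) a b l : cone P -> t = X `&` P -> intX X t a -> P b -> 0 < l ->
  gD G (l *: a + b) -> intX X t (gnz G (l *: a + b)).
Proof.
move=> [Padd Psc] tE [ta [rho rho0 Hrho]] Pb l0 Dv.
set v := l *: a + b in Dv *.
have [Xa Pa] : X a /\ P a by move: ta; rewrite tE.
have Pv : P v by apply: Padd => //; apply: Psc.
have k0 := gkap_pos Dv; set k := gkap G v in k0.
have ts0 : t (gnz G v).
  rewrite tE; split; first exact: gnzX.
  by rewrite gnzE //; apply: Psc => //; rewrite invr_gt0.
split => //.
have Da := gXD G Xa.
have [d1 d10 Hd1] := gnz_cont Da rho0.
have [d2 d20 Hd2] := gD_open Da.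
have m0 : 0 < minr d1 d2 by rewrite lt_min d10 d20.
exists (minr d1 d2 * l / k); first by rewrite divr_gt0 // mulr_gt0.
move=> s Hs Xs.
pose w := l^-1 *: (k *: s - b).
have Eaw : a - w = (l^-1 * k) *: (gnz G v - s).
  have -> : (l^-1 * k) *: (gnz G v - s) = l^-1 *: (v - k *: s).
    by rewrite -scalerA scalerBr gnzE // scalerA mulfV ?gt_eqF // scale1r.
  rewrite /w /v -{1}[a]scale1r -(mulVf (lt0r_neq0 l0)) -scalerA -scalerBr.
  by congr (_ *: _); rewrite opprB addrA.
have aw : `|a - w| < minr d1 d2.
  rewrite Eaw normrZ gtr0_norm ?mulr_gt0 ?invr_gt0 //.
  have -> : minr d1 d2 = l^-1 * k * (minr d1 d2 * l / k).
    by field; rewrite ?lt0r_neq0.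
  by rewrite ltr_pM2l // mulr_gt0 ?invr_gt0.
have Dw : gD G w by apply: Hd2; apply: lt_le_trans aw _; rewrite ge_min lexx orbT.
have tw : t (gnz G w).
  apply: Hrho; last exact: gnzX.
  rewrite -{1}(gnz_id G Xa); apply: Hd1; apply: lt_le_trans aw _; by rewrite ge_min lexx.
have Pw : P w.
  rewrite (gnz_inv Dw); apply: Psc; first exact: gkap_pos.
  by move: tw; rewrite tE => -[].
have Pks : P (k *: s).
  have -> : k *: s = l *: w + b.
    by rewrite /w scalerA mulfV ?gt_eqF // scale1r subrK.
  by apply: Padd => //; apply: Psc.
rewrite tE; split => //.
have -> : s = k^-1 *: (k *: s) by rewrite scalerA mulVf ?gt_eqF // scale1r.
by apply: Psc => //; rewrite invr_gt0.
Qed.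

Lemma intnear (R : realType) (V : normedModType R) (X : set V) (G : GD X)
  (t P : set V) p0 y : cone P -> t = X `&` P -> intX X t p0 -> t y ->
  forall e, 0 < e -> exists p, intX X t p /\ `|y - p| < e.
Proof.
move=> cP tE ip0 ty e e0.
have [Xy Py] : X y /\ P y by move: ty; rewrite tE.
have Dy := gXD G Xy.
have [d1 d10 Hd1] := gnz_cont Dy e0.
have [d2 d20 Hd2] := gD_open Dy.
have m0 : 0 < minr d1 d2 by rewrite lt_min d10 d20.
set m := minr d1 d2 in m0.
have n0 : 0 < 2 * (`|p0| + 1) by rewrite mulr_gt0 // ltr_wpDl.
pose l := m / (2 * (`|p0| + 1)).
have l0 : 0 < l by rewrite divr_gt0.
have lp : `|y - (l *: p0 + y)| < m.
  rewrite opprD addrCA subrr addr0 normrN normrZ gtr0_norm //.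
  rewrite /l mulrAC ltr_pdivrMr // ltr_pM2l //.
  have := normr_ge0 p0; lra.
have Dv : gD G (l *: p0 + y).
  by apply: Hd2; apply: lt_le_trans lp _; rewrite ge_min lexx orbT.
exists (gnz G (l *: p0 + y)); split; first exact: intcone cP tE ip0 Py l0 Dv.
rewrite -{1}(gnz_id G Xy); apply: Hd1; apply: lt_le_trans lp _.
by rewrite ge_min lexx.
Qed.

Definition relclosed (R : realType) (V : normedModType R) (X t : set V) :=
  forall v, X v -> ~ t v -> exists2 d, 0 < d & forall w, `|v - w| < d -> ~ t w.

Lemma baire (R : realType) (V : normedModType R) (X : set V) (s : seq (set V)) :
  (forall t, t \in s -> relclosed X t) -> forall q rho, X q -> 0 < rho ->
  (forall w, X w -> `|q - w| < rho -> exists2 t, t \in s & t w) ->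
  exists2 t, t \in s & exists q', `|q - q'| < rho /\ intX X t q'.
Proof.
elim: s => [|t0 s IH] Hcl q rho Xq rho0 Hcov.
  by have := Hcov q Xq; rewrite subrr normr0 => /(_ rho0) [t]; rewrite in_nil.
case: (pselect (exists w, X w /\ `|q - w| < rho /\ ~ t0 w)) => [|H]; last first.
  have H' : forall w, X w -> `|q - w| < rho -> t0 w.
    move=> w Xw hw; case: (pselect (t0 w)) => // ntw.
    by exfalso; apply: H; exists w.
  exists t0; first exact: mem_head.
  exists q; split; first by rewrite subrr normr0.
  split; first by apply: H' => //; rewrite subrr normr0.
  by exists rho => // w hw Xw; apply: H'.
move=> [q1 [Xq1 [hq1 nt]]].
have [d d0 Hd] := Hcl t0 (mem_head _ _) q1 Xq1 nt.
have r0 : 0 < minr d (rho - `|q - q1|) by rewrite lt_min d0 subr_gt0 hq1.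
have Hcl' : forall t, t \in s -> relclosed X t.
  by move=> t ts; apply: Hcl; rewrite in_cons ts orbT.
have [|t ts [q' [hq' iq']]] := IH Hcl' q1 _ Xq1 r0; last first.
  exists t; first by rewrite in_cons ts orbT.
  exists q'; split => //.
  apply: le_lt_trans (ler_distD q1 q q') _.
  move: hq'; rewrite lt_min => /andP [_]; lra.
move=> w Xw hw.
have [d' d'0 Hd'] : exists2 d', 0 < d' & d' = d by exists d.
have hqw : `|q - w| < rho.
  apply: le_lt_trans (ler_distD q1 q w) _.
  move: hw; rewrite lt_min => /andP [_]; lra.
have [t] := Hcov w Xw hqw.
rewrite in_cons => /orP [/eqP -> tw|ts tw]; last by exists t.
exfalso; apply: (Hd w) => //.
by move: hw; rewrite lt_min => /andP [].
Qed.

Record TD (R : realType) (V : normedModType R) (X : set V) (T : set (set V)) := MkTD {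
  tcone : forall t, T t -> exists P, cone P /\ t = X `&` P;
  tclosed : forall t, T t -> relclosed X t;
  tthick : forall t, T t -> exists a, intX X t a;
  tdisj : forall t1 t2, T t1 -> T t2 -> t1 <> t2 ->
     forall a, intX X t1 a -> intX X t2 a -> False
}.

Definition incone (R : realType) (V : normedModType R) (X t : set V) (v : V) :=
  forall P, cone P -> t = X `&` P -> P v.

Lemma incone_add (R : realType) (V : normedModType R) (X t : set V) a b :
  incone X t a -> incone X t b -> incone X t (a + b).
Proof. by move=> ha hb P cP tE; apply: cP.1; [apply: ha| apply: hb]. Qed.

Lemma incone_scale (R : realType) (V : normedModType R) (X t : set V) l a :
  0 < l -> incone X t a -> incone X t (l *: a).
Proof. by move=> l0 ha P cP tE; apply: cP.2 => //; apply: ha. Qed.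

Lemma in_incone (R : realType) (V : normedModType R) (X t : set V) a :
  t a -> incone X t a.
Proof. by move=> ta P cP tE; move: ta; rewrite tE => -[]. Qed.

Lemma incone_nz (R : realType) (V : normedModType R) (X : set V) (G : GD X)
  T (TT : TD X T) t v : T t -> gD G v -> incone X t v -> t (gnz G v).
Proof.
move=> Tt Dv iv; have [P [cP tE]] := tcone TT Tt.
rewrite tE; split; first exact: gnzX.
rewrite gnzE //; apply: cP.2; first by rewrite invr_gt0 gkap_pos.
exact: iv.
Qed.

Lemma nz_incone (R : realType) (V : normedModType R) (X : set V) (G : GD X)
  (t : set V) v : gD G v -> t (gnz G v) -> incone X t v.
Proof.
move=> Dv tv P cP tE; rewrite (gnz_inv Dv); apply: cP.2; first exact: gkap_pos.
by move: tv; rewrite tE => -[].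
Qed.

Lemma incone_closed (R : realType) (V : normedModType R) (X : set V) (G : GD X)
  T (TT : TD X T) t v : T t -> gD G v -> ~ incone X t v ->
  exists2 d, 0 < d & forall w, `|v - w| < d -> ~ incone X t w.
Proof.
move=> Tt Dv niv.
have ntv : ~ t (gnz G v) by move=> tv; apply: niv; exact: nz_incone tv.
have [e e0 He] := tclosed TT Tt (gnzX Dv) ntv.
have [d1 d10 Hd1] := gnz_cont Dv e0.
have [d2 d20 Hd2] := gD_open Dv.
exists (minr d1 d2); first by rewrite lt_min d10 d20.
move=> w; rewrite lt_min => /andP [h1 h2] iw.
apply: (He (gnz G w)); first exact: Hd1.
exact: (incone_nz TT Tt (Hd2 _ h2) iw).
Qed.

Lemma core (R : realType) (V : normedModType R) (X : set V) (G : GD X)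
  T (TT : TD X T) (x : V) (sx : seq (set V)) r :
  (forall t, t \in sx -> T t /\ t x) -> 0 < r ->
  (forall w, X w -> `|x - w| < r -> exists2 t, t \in sx & t w) ->
  forall z, (forall t, t \in sx -> incone X t z) -> gD G (x - z) ->
  `|x - gnz G (x - z)| < r -> forall j, j \in sx -> incone X j (x - z).
Proof.
move=> Hsx r0 Hnb z Hz Dw Hw j js.
case: (pselect (incone X j (x - z))) => // niw; exfalso.
have [Tj jx] := Hsx j js.
have [d1 d10 Hd1] := incone_closed TT Tj Dw niw.
have e0 : 0 < r - `|x - gnz G (x - z)| by rewrite subr_gt0.
have [d2 d20 Hd2] := gnz_cont Dw e0.
have [d3 d30 Hd3] := gD_open Dw.
have m0 : 0 < minr d1 (minr d2 d3) by rewrite !lt_min d10 d20 d30.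
have [Pj [cPj jE]] := tcone TT Tj.
have [p0 ip0] := tthick TT Tj.
have [p [ip hp]] := intnear G cPj jE ip0 jx m0.
move: hp; rewrite !lt_min => /andP [hp1 /andP [hp2 hp3]].
have Ew : (x - z) - (p - z) = x - p by rewrite opprB addrA subrK.
have Dw' : gD G (p - z) by apply: Hd3; rewrite Ew.
have niw' : ~ incone X j (p - z) by apply: Hd1; rewrite Ew.
have hq : `|x - gnz G (p - z)| < r.
  have := Hd2 (p - z); rewrite Ew => /(_ hp2) h.
  apply: le_lt_trans (ler_distD (gnz G (x - z)) _ _) _; lra.
set q := gnz G (p - z) in hq.
have Xq : X q := gnzX Dw'.
have njq : ~ j q by move=> jq; apply: niw'; exact: nz_incone jq.
have k0 := gkap_pos Dw'; set k := gkap G (p - z) in k0.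
have pE : p = k *: q + z by rewrite /q -(gnz_inv Dw') subrK.
have [jp [rp rp0 Hrp]] := ip.
have Xp : X p by move: jp; rewrite jE => -[].
have Dp := gXD G Xp.
have rp20 : 0 < rp / 2 by rewrite divr_gt0.
have [d5 d50 Hd5] := gnz_cont Dp rp20.
have [d6 d60 Hd6] := gD_open Dp.
have [d4 d40 Hd4] := tclosed TT Tj Xq njq.
have rW0 : 0 < minr d4 (minr (r - `|x - q|) (minr d5 d6 / k)).
  by rewrite !lt_min d40 subr_gt0 hq divr_gt0 // lt_min d50 d60.
set rW := minr d4 _ in rW0.
have Hcl' : forall t, t \in [seq t <- sx | t != j] -> relclosed X t.
  move=> t; rewrite mem_filter => /andP [_ ts]; exact: (tclosed TT (Hsx t ts).1).
have Hcov' : forall w, X w -> `|q - w| < rW ->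
    exists2 t, t \in [seq t <- sx | t != j] & t w.
  move=> w Xw hw.
  move: (hw); rewrite /rW !lt_min => /andP [hw4 /andP [hw1 _]].
  have hxw : `|x - w| < r.
    apply: le_lt_trans (ler_distD q x w) _; lra.
  have [t ts tw] := Hnb w Xw hxw.
  exists t => //; rewrite mem_filter ts andbT.
  by apply/eqP => tj; apply: (Hd4 w hw4); rewrite -tj.
have [i iS [q' [hqq' iq']]] := baire Hcl' Xq rW0 Hcov'.
move: iS; rewrite mem_filter => /andP [/eqP ij iSx].
have [Ti _] := Hsx i iSx.
have [Pi [cPi iE]] := tcone TT Ti.
have hpv : `|p - (k *: q' + z)| < minr d5 d6.
  rewrite pE.
  have -> : k *: q + z - (k *: q' + z) = k *: (q - q') by rewrite scalerBr opprD addrACA subrr addr0.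
  rewrite normrZ gtr0_norm //.
  have h : `|q - q'| < minr d5 d6 / k.
    by move: hqq'; rewrite /rW lt_min => /andP [_]; rewrite lt_min => /andP [_].
  by rewrite mulrC -ltr_pdivlMr.
move: hpv; rewrite lt_min => /andP [hv5 hv6].
have Dv := Hd6 _ hv6.
have iv1 : intX X i (gnz G (k *: q' + z)).
  exact: (intcone cPi iE iq' (Hz i iSx Pi cPi iE) k0 Dv).
have hpn := Hd5 _ hv5; rewrite (gnz_id G Xp) in hpn.
have iv2 : intX X j (gnz G (k *: q' + z)).
  split; first by apply: Hrp; [lra | exact: gnzX].
  exists (rp / 2) => // u hu Xu; apply: Hrp => //.
  apply: le_lt_trans (ler_distD (gnz G (k *: q' + z)) _ _) _; lra.
exact: (tdisj TT Ti Tj ij iv1 iv2).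
Qed.

Lemma span_P (K : fieldType) (vT : vectType K) (P : vT -> Prop) :
  P 0 -> (forall a v w, P v -> P w -> P (a *: v + w)) ->
  forall s : seq vT, (forall v, v \in s -> P v) -> forall v, v \in (span s) -> P v.
Proof.
move=> P0 Pc; elim => [|v0 s IH] Hs v.
  by rewrite span_nil memv0 => /eqP ->.
rewrite span_cons => /memv_addP [u /vlineP [k ->] [w ws ->]].
apply: Pc; first by apply: Hs; exact: mem_head.
by apply: IH => // y ys; apply: Hs; rewrite in_cons ys orbT.
Qed.

Lemma pred_vspace (K : fieldType) (vT : vectType K) (P : vT -> Prop) :
  P 0 -> (forall a v w, P v -> P w -> P (a *: v + w)) ->
  exists L : {vspace vT}, forall v, v \in L <-> P v.
Proof.
move=> P0 Pc.
suff : forall m (s : seq vT), (forall v, v \in s -> P v) ->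
    (\dim {:vT} <= \dim (span s) + m)%N -> exists L : {vspace vT}, forall v, v \in L <-> P v.
  by move=> /(_ (\dim {:vT}) [::]); apply => //; rewrite addnC leq_addr.
elim => [|m IH] s Hs hd.
  exists (span s) => v; split; first exact: span_P.
  move=> _; have /eqP -> : ((span s) == fullv).
    by rewrite eqEdim subvf /= -(addn0 (\dim (span s))).
  exact: memvf.
case: (pselect (forall v, P v -> v \in (span s))) => H.
  by exists (span s) => v; split; [exact: span_P | exact: H].
have [v [Pv nv]] : exists v, P v /\ v \notin (span s).
  apply: NNPP => hn; apply: H => v Pv; apply: NNPP => nv'; apply: hn.
  by exists v; split => //; apply/negP.
apply: (IH (v :: s)).
  by move=> y; rewrite in_cons => /orP [/eqP ->|]; [| exact: Hs].
apply: leq_trans hd _; rewrite addnS -addSn leq_add2r.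
have sub : ((span s) <= (span (v :: s)))%VS by rewrite span_cons addvSr.
have := dimv_leqif_sup sub; case=> le1 eq1.
rewrite ltn_neqAle le1 andbT eq1.
apply/negP => /subvP /(_ v); rewrite span_cons.
have := memv_add (memv_line v) (mem0v (span s)); rewrite addr0 => h /(_ h).
by rewrite (negbTE nv).
Qed.

Definition Qall (R : realType) (V : normedModType R) (X : set V) (sx : seq (set V)) (u : V) :=
  forall t, t \in sx -> incone X t u.

Definition Lp (R : realType) (V : normedModType R) (X : set V) (sx : seq (set V)) (x v : V) :=
  exists2 d, 0 < d & forall e, 0 < e -> e <= d ->
    Qall X sx (x + e *: v) /\ Qall X sx (x - e *: v).

Lemma Qall_add (R : realType) (V : normedModType R) (X : set V) (sx : seq (set V)) a b :
  Qall X sx a -> Qall X sx b -> Qall X sx (a + b).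
Proof. by move=> ha hb t ts; apply: incone_add; [apply: ha | apply: hb]. Qed.

Lemma Qall_scale (R : realType) (V : normedModType R) (X : set V) (sx : seq (set V)) l a :
  0 < l -> Qall X sx a -> Qall X sx (l *: a).
Proof. by move=> l0 ha t ts; apply: incone_scale => //; apply: ha. Qed.

Lemma Lp0 (R : realType) (V : normedModType R) (X : set V) (sx : seq (set V)) x :
  (forall t, t \in sx -> t x) -> Lp X sx x 0.
Proof.
move=> Hx; exists 1 => // e _ _; rewrite scaler0 subr0 addr0.
by split => t ts; apply: in_incone; apply: Hx.
Qed.

Lemma LpN (R : realType) (V : normedModType R) (X : set V) (sx : seq (set V)) x v :
  Lp X sx x v -> Lp X sx x (- v).
Proof.
move=> [d d0 H]; exists d => // e e0 ed; have [h1 h2] := H e e0 ed.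
by rewrite scalerN opprK; split.
Qed.

Lemma half_comb (R : realType) (V : normedModType R) (x a b : V) (e : R) :
  x + e *: (a + b) = 2^-1 *: ((x + (e * 2) *: a) + (x + (e * 2) *: b)).
Proof.
rewrite !scalerDr !scalerA (_ : 2^-1 * (e * 2) = e); last by field.
rewrite addrACA -scalerDl (_ : 2^-1 + 2^-1 = 1 :> R) ?scale1r //; last by field.
Qed.

Lemma LpD (R : realType) (V : normedModType R) (X : set V) (sx : seq (set V)) x v w :
  Lp X sx x v -> Lp X sx x w -> Lp X sx x (v + w).
Proof.
move=> [d1 d10 H1] [d2 d20 H2].
exists (minr d1 d2 / 2); first by rewrite divr_gt0 // lt_min d10 d20.
move=> e e0 ed.
have e20 : 0 < e * 2 by rewrite mulr_gt0.
have ed' : e * 2 <= minr d1 d2 by move: ed; rewrite ler_pdivlMr.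
have ed1 : e * 2 <= d1 by apply: le_trans ed' _; rewrite ge_min lexx.
have ed2 : e * 2 <= d2 by apply: le_trans ed' _; rewrite ge_min lexx orbT.
have [a1 b1] := H1 _ e20 ed1; have [a2 b2] := H2 _ e20 ed2.
have h20 : 0 < (2 : R)^-1 by rewrite invr_gt0.
split; first by rewrite half_comb; apply: Qall_scale => //; apply: Qall_add.
rewrite -scalerN opprD half_comb !scalerN.
by apply: Qall_scale => //; apply: Qall_add.
Qed.

Lemma LpZp (R : realType) (V : normedModType R) (X : set V) (sx : seq (set V)) x v a :
  0 < a -> Lp X sx x v -> Lp X sx x (a *: v).
Proof.
move=> a0 [d d0 H]; exists (d / a); first by rewrite divr_gt0.
move=> e e0 ed; rewrite scalerA; apply: H; first by rewrite mulr_gt0.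
by move: ed; rewrite ler_pdivlMr.
Qed.

Lemma LpC (R : realType) (V : normedModType R) (X : set V) (sx : seq (set V)) x :
  (forall t, t \in sx -> t x) ->
  forall a v w, Lp X sx x v -> Lp X sx x w -> Lp X sx x (a *: v + w).
Proof.
move=> Hx a v w hv hw; apply: LpD => //.
have [a0|a0|->] := ltgtP a 0; last by rewrite scale0r; apply: Lp0.
  rewrite -[a]opprK scaleNr; apply: LpN; apply: LpZp => //; by rewrite oppr_gt0.
exact: LpZp.
Qed.

Lemma C_Lp (R : realType) (V : normedModType R) (X : set V) (G : GD X)
  T (TT : TD X T) (x : V) (sx : seq (set V)) r :
  (forall t, t \in sx -> T t /\ t x) -> 0 < r ->
  (forall w, X w -> `|x - w| < r -> exists2 t, t \in sx & t w) -> X x ->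
  forall c, (forall t, t \in sx -> t c) -> Lp X sx x c.
Proof.
move=> Hsx r0 Hnb Xx c Hc.
have Dx := gXD G Xx.
have [d1 d10 Hd1] := gnz_cont Dx r0.
have [d2 d20 Hd2] := gD_open Dx.
have m0 : 0 < minr d1 d2 by rewrite lt_min d10 d20.
set m := minr d1 d2 in m0.
have c0 : 0 < `|c| + 1 by rewrite ltr_wpDl.
exists (m / (`|c| + 1)); first by rewrite divr_gt0.
move=> e e0 ed.
have Qx : Qall X sx x by move=> t ts; apply: in_incone; exact: (Hsx t ts).2.
have Qc : Qall X sx c by move=> t ts; apply: in_incone; exact: Hc.
split; first by apply: Qall_add => //; apply: Qall_scale.
have hn : `|x - (x - e *: c)| < m.
  rewrite opprB addrC subrK normrZ gtr0_norm //.
  apply: le_lt_trans (_ : m / (`|c| + 1) * `|c| < m).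
    by apply: ler_wpM2r => //; exact: normr_ge0.
  rewrite mulrAC ltr_pdivrMr // ltr_pM2l //; lra.
move: hn; rewrite lt_min => /andP [h1 h2].
apply: (core TT Hsx r0 Hnb (z := e *: c)).
- by apply: Qall_scale.
- exact: Hd2.
- by have := Hd1 _ h1; rewrite (gnz_id G Xx).
Qed.

Lemma partA (R : realType) (n : nat) (X : set 'rV[R]_(n.+1)) (G : GD X)
  T (TT : TD X T) (x : 'rV[R]_(n.+1)) (sx : seq (set 'rV[R]_(n.+1))) r :
  (forall t, t \in sx -> T t /\ t x) -> 0 < r ->
  (forall w, X w -> `|x - w| < r -> exists2 t, t \in sx & t w) -> X x ->
  forall y, X y -> `|x - y| < r ->
  (forall L : {vspace 'rV[R]_(n.+1)},
      (forall c, (forall t, t \in sx -> t c) -> c \in L) -> y \in L) ->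
  forall t, t \in sx -> t y.
Proof.
move=> Hsx r0 Hnb Xx y Xy hy Hy.
have Hx : forall t, t \in sx -> t x by move=> t ts; exact: (Hsx t ts).2.
have [L HL] := pred_vspace (@Lp0 _ _ X _ _ Hx) (@LpC _ _ X _ _ Hx).
have yL : y \in L.
  by apply: Hy => c hc; apply/HL; exact: (C_Lp G TT Hsx r0 Hnb Xx hc).
have [d d0 H] := (HL y).1 yL.
have [_ hq] := H d d0 (lexx d).
have Dy := gXD G Xy.
have E : x - (x - d *: y) = d *: y by rewrite opprB addrC subrK.
have Dd : gD G (d *: y) by apply: gDscale.
have hc := core (G:=G) TT Hsx r0 Hnb hq; rewrite E in hc.
move=> t ts.
have := hc Dd; rewrite (gnz_scale Dy d0) (gnz_id G Xy) => /(_ hy t ts) it.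
have := incone_nz TT (Hsx t ts).1 Dd it.
by rewrite (gnz_scale Dy d0) (gnz_id G Xy).
Qed.

Lemma tileX (R : realType) (V : normedModType R) (X : set V) T (TT : TD X T) t v :
  T t -> t v -> X v.
Proof. by move=> Tt tv; have [P [_ tE]] := tcone TT Tt; move: tv; rewrite tE => -[]. Qed.

Lemma partB (R : realType) (n : nat) (X : set 'rV[R]_(n.+1)) (G : GD X)
  T (TT : TD X T) (x : 'rV[R]_(n.+1)) (sx : seq (set 'rV[R]_(n.+1))) r :
  (forall t, t \in sx -> T t /\ t x) -> 0 < r ->
  (forall w, X w -> `|x - w| < r -> exists2 t, t \in sx & t w) -> X x ->
  forall t y e, T t -> t y -> (forall t', t' \in sx -> t' y) -> 0 < e ->
  (forall w, X w -> `|y - w| < e ->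
    (forall L : {vspace 'rV[R]_(n.+1)},
      (forall c, (forall t, t \in sx -> t c) -> c \in L) -> w \in L) ->
    forall t', t' \in sx -> t' w) -> t x.
Proof.
move=> Hsx r0 Hnb Xx t y e Tt ty Cy e0 Hrel.
case: (pselect (t x)) => // ntx; exfalso.
have Xy := tileX TT Tt ty.
have Dy := gXD G Xy; have Dx := gXD G Xx.
have [d1 d10 Hd1] := gnz_cont Dy e0.
have [d2 d20 Hd2] := gD_open Dy.
have m0 : 0 < minr d1 d2 by rewrite lt_min d10 d20.
set m := minr d1 d2 in m0.
have yx0 : 0 < 2 * (`|y - x| + 1) by rewrite mulr_gt0 // ltr_wpDl.
pose la := m / (2 * (`|y - x| + 1)).
have la0 : 0 < la by rewrite divr_gt0.
pose vl := y + la *: (y - x).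
have hvl : `|y - vl| < m.
  rewrite /vl opprD addrA subrr add0r normrN normrZ gtr0_norm //.
  rewrite /la mulrAC ltr_pdivrMr // ltr_pM2l //.
  have := normr_ge0 (y - x); lra.
move: (hvl); rewrite lt_min => /andP [hv1 hv2].
have Dvl : gD G vl := Hd2 _ hv2.
set y' := gnz G vl.
have hy' : `|y - y'| < e by rewrite -{1}(gnz_id G Xy); apply: Hd1.
have Xy' : X y' := gnzX Dvl.
have Cy' : forall t', t' \in sx -> t' y'.
  apply: Hrel => // L HL.
  have xL : x \in L by apply: HL => t' ts; exact: (Hsx t' ts).2.
  have yL : y \in L by apply: HL.
  have vL : vl \in L by rewrite /vl memvD // memvZ // memvB.
  by rewrite /y' gnzE // memvZ.
have k0 := gkap_pos Dvl; set k := gkap G vl in k0.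
have vE : vl = k *: y' := gnz_inv Dvl.
have Dlx : gD G (la *: x) by apply: gDscale.
have [d3 d30 Hd3] := gnz_cont Dlx r0.
have [d4 d40 Hd4] := gD_open Dlx.
have l10 : 0 < 1 + la by rewrite ltr_wpDr // ltW.
have rho0 : 0 < minr d3 d4 / (1 + la) by rewrite divr_gt0 // lt_min d30 d40.
set rho := minr d3 d4 / (1 + la) in rho0.
have Hcov : forall s, X s -> `|y - s| < rho -> exists2 t', t' \in sx & t' s.
  move=> s Xs hs.
  pose u := (1 + la) *: s - k *: y'.
  have Eu : la *: x - u = (1 + la) *: (y - s).
    rewrite /u -vE /vl !scalerBr !scalerDl !scale1r opprB addrA; congr (_ - _).
    by rewrite addrCA [la *: x + _]addrCA subrr addr0.
  have hu : `|la *: x - u| < minr d3 d4.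
    by rewrite Eu normrZ gtr0_norm // mulrC -ltr_pdivlMr.
  move: hu; rewrite lt_min => /andP [hu3 hu4].
  have Du := Hd4 _ hu4.
  have := Hd3 _ hu3; rewrite (gnz_scale Dx la0) (gnz_id G Xx) => hxu.
  have [t' ts t'u] := Hnb _ (gnzX Du) hxu.
  exists t' => //.
  have iu := nz_incone Du t'u.
  have iy' : incone X t' y' := in_incone (Cy' t' ts).
  have is1 : incone X t' ((1 + la) *: s).
    have -> : (1 + la) *: s = u + k *: y' by rewrite /u subrK.
    by apply: incone_add => //; apply: incone_scale.
  have is2 : incone X t' s.
    have -> : s = (1 + la)^-1 *: ((1 + la) *: s).
      by rewrite scalerA mulVf ?scale1r // gt_eqF.
    by apply: incone_scale => //; rewrite invr_gt0.
  have := incone_nz TT (Hsx t' ts).1 (gXD G Xs) is2.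
  by rewrite (gnz_id G Xs).
have [P [cP tE]] := tcone TT Tt.
have [p0 ip0] := tthick TT Tt.
have rho20 : 0 < rho / 2 by rewrite divr_gt0.
have [p [ip hp]] := intnear G cP tE ip0 ty rho20.
have [tp [rp rp0 Hrp]] := ip.
have Xp : X p := tileX TT Tt tp.
have r20 : 0 < minr rp (rho / 2) by rewrite lt_min rp0 rho20.
have Hcl : forall t', t' \in sx -> relclosed X t'.
  by move=> t' ts; exact: (tclosed TT (Hsx t' ts).1).
have Hcov' : forall w, X w -> `|p - w| < minr rp (rho / 2) ->
    exists2 t', t' \in sx & t' w.
  move=> w Xw; rewrite lt_min => /andP [_ hw]; apply: Hcov => //.
  apply: le_lt_trans (ler_distD p y w) _; lra.
have [i iS [q' [hq' iq']]] := baire Hcl Xp r20 Hcov'.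
move: hq'; rewrite lt_min => /andP [hq1 _].
have [Ti ix] := Hsx i iS.
have Xq' : X q' by have [iq _] := iq'; exact: (tileX TT Ti iq).
have itq : intX X t q'.
  split; first exact: Hrp.
  exists (rp - `|p - q'|); first by rewrite subr_gt0.
  move=> w hw Xw; apply: Hrp => //.
  apply: le_lt_trans (ler_distD q' p w) _; lra.
apply: (tdisj TT Ti Tt _ iq' itq).
by move=> it; apply: ntx; rewrite -it.
Qed.

Lemma cont_eps (R : realType) (U W : normedModType R) (f : U -> W) v :
  {for v, continuous f} -> forall e, 0 < e ->
  exists2 d, 0 < d & forall w, `|v - w| < d -> `|f v - f w| < e.
Proof.
move=> /cvgrPdist_lt H e e0; have := H e e0.
move=> /nbhs_ballP [d d0 Hd]; exists d => // w hw; apply: Hd.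
by rewrite -ball_normE.
Qed.

Lemma cont_epsR (R : realType) (U : normedModType R) (f : U -> R) v :
  {for v, continuous f} -> forall e, 0 < e ->
  exists2 d, 0 < d & forall w, `|v - w| < d -> `|f v - f w| < e.
Proof. exact: (@cont_eps R U R^o). Qed.

Lemma closed_eps (R : realType) (U : normedModType R) (A : set U) :
  (forall v, ~ A v -> exists2 d, 0 < d & forall w, `|v - w| < d -> ~ A w) ->
  closed A.
Proof.
move=> H; rewrite -openC openE => v /H [d d0 Hd].
apply/nbhs_ballP; exists d => // w; rewrite -ball_normE /= => hw; exact: Hd.
Qed.

Lemma ballN (R : realType) (U : normedModType R) (a w : U) e :
  ball a e w <-> `|a - w| < e.
Proof. by rewrite -ball_normE. Qed.

Lemma pos_near (R : realType) (U : normedModType R) (f : U -> R) v :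
  continuous f -> 0 < f v -> exists2 d, 0 < d & forall w, `|v - w| < d -> 0 < f w.
Proof.
move=> fc f0; have [d d0 Hd] := cont_epsR (fc v) f0.
exists d => // w /Hd h.
have := ler_norm (f v - f w); lra.
Qed.

Lemma mkGD (R : realType) (U : normedModType R) (X : set U) (f1 f2 kap : U -> R) :
  continuous f1 -> continuous f2 -> continuous kap ->
  (forall v, X v -> 0 < f1 v /\ 0 < f2 v) ->
  (forall v, 0 < f1 v -> 0 < f2 v -> 0 < kap v) ->
  (forall v, 0 < f1 v -> 0 < f2 v -> X ((kap v)^-1 *: v)) ->
  (forall v, X v -> kap v = 1) ->
  (forall v l, 0 < f1 v -> 0 < f2 v -> 0 < l -> 0 < f1 (l *: v) /\ 0 < f2 (l *: v)) ->
  (forall v l, 0 < f1 v -> 0 < f2 v -> 0 < l -> kap (l *: v) = l * kap v) ->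
  exists G : GD X, True.
Proof.
move=> c1 c2 ck HXD Hpos HnzX Hid Hsc Hksc.
pose D := [set v | 0 < f1 v /\ 0 < f2 v].
pose nz := fun v => (kap v)^-1 *: v.
have Dopen : forall v, D v -> exists2 d, 0 < d & forall w, `|v - w| < d -> D w.
  move=> v [h1 h2].
  have [d1 d10 H1] := pos_near c1 h1; have [d2 d20 H2] := pos_near c2 h2.
  exists (minr d1 d2); first by rewrite lt_min d10 d20.
  by move=> w; rewrite lt_min => /andP [a b]; split; [exact: H1|exact: H2].
have XD : forall v, X v -> D v by move=> v /HXD.
have kpos : forall v, D v -> 0 < kap v by move=> v [h1 h2]; apply: Hpos.
have nzE : forall v, D v -> nz v = (kap v)^-1 *: v by [].
have nzX : forall v, D v -> X (nz v) by move=> v []; exact: HnzX.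
have nzid : forall v, X v -> nz v = v by move=> v /Hid; rewrite /nz => ->; rewrite invr1 scale1r.
have Dsc : forall v l, D v -> 0 < l -> D (l *: v) by move=> v l [] *; exact: Hsc.
have nzsc : forall v l, D v -> 0 < l -> nz (l *: v) = nz v.
  move=> v l [h1 h2] l0; rewrite /nz Hksc // scalerA invfM mulrAC mulVf ?gt_eqF //.
  by rewrite mul1r.
have nzc : forall v, D v -> forall e, 0 < e -> exists2 d, 0 < d &
     forall w, `|v - w| < d -> `|nz v - nz w| < e.
  move=> v Dv; apply: cont_eps.
  apply: continuousZ; last exact: cvg_id.
  by apply: continuousV; [rewrite gt_eqF // kpos | exact: ck].
by exists (MkGD Dopen XD kpos nzE nzX nzid Dsc nzsc nzc).
Qed.

Lemma neq_near (R : realType) (U : normedModType R) (f : U -> R) v c :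
  continuous f -> f v <> c -> exists2 d, 0 < d & forall w, `|v - w| < d -> f w <> c.
Proof.
move=> fc fv.
have e0 : 0 < `|f v - c| by rewrite normr_gt0 subr_eq0; apply/eqP.
have [d d0 Hd] := cont_epsR (fc v) e0.
exists d => // w /Hd h fw; move: h; rewrite fw ltxx //.
Qed.

Lemma sq_cont (R : realType) (n : nat) (i : 'I_n.+1) :
  continuous (fun v : 'rV[R]_(n.+1) => v ord0 i ^+ 2).
Proof.
have -> : (fun v : 'rV[R]_(n.+1) => v ord0 i ^+ 2) =
    (fun v => v ord0 i) \* (fun v => v ord0 i).
  by apply/funext => v /=; rewrite expr2.
move=> v; apply: continuousM; exact: coord_continuous.
Qed.

Lemma sqsP_cont (R : realType) (n : nat) (P : pred 'I_n.+1) :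
  continuous (fun v : 'rV[R]_(n.+1) => \sum_(i < n.+1 | P i) v ord0 i ^+ 2).
Proof.
apply: (@continuous_big R^o _ +%R 0 P add_continuous) => i _.
exact: sq_cont.
Qed.

Lemma sqs_scale (R : realType) (n : nat) (P : pred 'I_n.+1) (l : R) (v : 'rV[R]_(n.+1)) :
  \sum_(i < n.+1 | P i) (l *: v) ord0 i ^+ 2 = l ^+ 2 * \sum_(i < n.+1 | P i) v ord0 i ^+ 2.
Proof. by rewrite mulr_sumr; apply: eq_bigr => i _; rewrite mxE exprMn. Qed.

Lemma sqs_ge0 (R : realType) (n : nat) (P : pred 'I_n.+1) (v : 'rV[R]_(n.+1)) :
  0 <= \sum_(i < n.+1 | P i) v ord0 i ^+ 2.
Proof. by apply: sumr_ge0 => i _; exact: sqr_ge0. Qed.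

Lemma geomGD (R : realType) (n : nat) (g : geometry) :
  exists G : GD (@Xspace R n g), True.
Proof.
have cmax : continuous (fun v : 'rV[R]_(n.+1) => v ord0 ord_max) := @coord_continuous _ 1 n.+1 ord0 ord_max.
case: g => /=.
- apply: (@mkGD _ _ _ (fun v : 'rV[R]_(n.+1) => v ord0 ord_max) (fun v : 'rV[R]_(n.+1) => v ord0 ord_max)
     (fun v : 'rV[R]_(n.+1) => v ord0 ord_max)) => //.
  + by move=> v ->.
  + by move=> v h _; rewrite mxE mulVf // gt_eqF.
  + by move=> v l h _ l0; rewrite mxE mulr_gt0.
  + by move=> v l _ _ _; rewrite mxE.
- pose s := fun v : 'rV[R]_(n.+1) => \sum_(i < n.+1) v ord0 i ^+ 2.
  have cs : continuous s by exact: (@sqsP_cont R n (fun=> true)).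
  apply: (@mkGD _ _ _ s s (fun v : 'rV[R]_(n.+1) => Num.sqrt (s v))) => //.
  + by move=> v; apply: continuous_comp; [exact: cs | exact: sqrt_continuous].
  + by move=> v; rewrite /s => ->.
  + by move=> v h _; rewrite sqrtr_gt0.
  + move=> v h _; rewrite sqs_scale /= -/(s v) exprVn sqr_sqrtr ?ltW //.
    by rewrite mulVf // gt_eqF.
  + by move=> v h; rewrite /s h sqrtr1.
  + by move=> v l h _ l0; rewrite /s sqs_scale mulr_gt0 // exprn_gt0.
  + by move=> v l _ _ l0; rewrite /s sqs_scale sqrtrM ?sqr_ge0 // sqrtr_sqr gtr0_norm.
- pose s := fun v : 'rV[R]_(n.+1) =>
    \sum_(i < n.+1 | i != ord_max) v ord0 i ^+ 2 - v ord0 ord_max ^+ 2.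
  have cs : continuous s.
    have -> : s = (fun v : 'rV[R]_(n.+1) => \sum_(i < n.+1 | i != ord_max) v ord0 i ^+ 2)
       - (fun v : 'rV[R]_(n.+1) => v ord0 ord_max ^+ 2) by apply/funext.
    move=> v; apply: continuousB; first exact: (@sqsP_cont R n (fun i => i != ord_max) v).
    exact: (@sq_cont R n ord_max v).
  have cns : continuous (fun v : 'rV[R]_(n.+1) => - s v) by move=> v; exact: (continuousN (cs v)).
  have sE : forall l v, s (l *: v) = l ^+ 2 * s v.
    by move=> l v; rewrite /s sqs_scale mxE exprMn mulrBr.
  apply: (@mkGD _ _ _ (fun v : 'rV[R]_(n.+1) => - s v) (fun v : 'rV[R]_(n.+1) => v ord0 ord_max)
     (fun v : 'rV[R]_(n.+1) => Num.sqrt (- s v))) => //.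
  + by move=> v; apply: continuous_comp; [exact: cns | exact: sqrt_continuous].
  + by move=> v [h1 h2]; rewrite /s h1 opprK.
  + by move=> v h _; rewrite sqrtr_gt0.
  + move=> v h1 h2; split.
      rewrite -/(s _) sE exprVn sqr_sqrtr ?ltW //.
      by rewrite -mulrNN mulNr mulVf ?gt_eqF // opprK.
    by rewrite mxE mulr_gt0 // invr_gt0 sqrtr_gt0.
  + by move=> v [h1 _]; rewrite /s h1 opprK sqrtr1.
  + by move=> v l h1 h2 l0; rewrite sE mxE -mulrN !mulr_gt0 // exprn_gt0.
  + move=> v l _ _ l0; rewrite sE -mulrN sqrtrM ?sqr_ge0 // sqrtr_sqr gtr0_norm //.
Qed.

Lemma Xclosed (R : realType) (n : nat) (g : geometry) : closed (@Xspace R n g).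
Proof.
have cmax : continuous (fun v : 'rV[R]_(n.+1) => v ord0 ord_max) :=
  @coord_continuous _ 1 n.+1 ord0 ord_max.
apply: closed_eps; case: g => v /= hv.
- exact: (neq_near cmax hv).
- exact: (neq_near (@sqsP_cont R n (fun=> true)) hv).
- pose s := fun v : 'rV[R]_(n.+1) =>
    \sum_(i < n.+1 | i != ord_max) v ord0 i ^+ 2 - v ord0 ord_max ^+ 2.
  have cs : continuous s.
    have -> : s = (fun v : 'rV[R]_(n.+1) => \sum_(i < n.+1 | i != ord_max) v ord0 i ^+ 2)
       - (fun v : 'rV[R]_(n.+1) => v ord0 ord_max ^+ 2) by apply/funext.
    move=> w; apply: continuousB; first exact: (@sqsP_cont R n (fun i => i != ord_max) w).
    exact: (@sq_cont R n ord_max w).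
  case: (pselect (s v = -1)) => hs; last first.
    have [d d0 Hd] := neq_near cs hs.
    by exists d => // w /Hd h [h1 _]; apply: h.
  have vle : v ord0 ord_max < 0.
    have h0 : v ord0 ord_max <= 0.
      by rewrite leNgt; apply/negP => h; apply: hv; split.
    have : v ord0 ord_max ^+ 2 >= 1.
      move: hs; rewrite /s => hs.
      have := @sqs_ge0 R n (fun i => i != ord_max) v; lra.
    rewrite lt_neqAle h0 andbT; apply: contraTneq => ->; rewrite expr0n /=; lra.
  have cn : continuous (fun w : 'rV[R]_(n.+1) => - w ord0 ord_max).
    by move=> w; exact: (continuousN (cmax w)).
  have vn : 0 < - v ord0 ord_max by rewrite oppr_gt0.
  have [d d0 Hd] := @pos_near R _ _ v cn vn.
  by exists d => // w /Hd h [_ h2]; move: h; rewrite oppr_gt0 => h; lra.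
Qed.

Lemma dotpD (R : realType) (n : nat) (u a b : 'rV[R]_(n.+1)) :
  dotp u (a + b) = dotp u a + dotp u b.
Proof. by rewrite /dotp -big_split; apply: eq_bigr => i _; rewrite mxE mulrDr. Qed.

Lemma dotpZ (R : realType) (n : nat) (u a : 'rV[R]_(n.+1)) l :
  dotp u (l *: a) = l * dotp u a.
Proof. by rewrite /dotp mulr_sumr; apply: eq_bigr => i _; rewrite mxE mulrCA. Qed.

Lemma dotp_cont (R : realType) (n : nat) (u : 'rV[R]_(n.+1)) :
  continuous (fun v => dotp u v).
Proof.
rewrite /dotp.
apply: (@continuous_big R^o _ +%R 0 xpredT add_continuous) => i _.
have -> : (fun v : 'rV[R]_(n.+1) => u ord0 i * v ord0 i) =
    (fun=> u ord0 i) \* (fun v : 'rV[R]_(n.+1) => v ord0 i) by [].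
move=> v; apply: continuousM; [exact: cst_continuous | exact: coord_continuous].
Qed.

Lemma intX_iff (R : realType) (n : nat) (X A : set 'rV[R]_(n.+1)) a :
  intX X A a <-> interior_in X A a.
Proof.
split.
  move=> [Aa [e e0 He]]; split => //; exists e; split => // w [bw Xw].
  by apply: He => //; move/ballN: bw.
move=> [Aa [e [e0 He]]]; split => //; exists e => // w hw Xw.
by apply: He; split => //; apply/ballN.
Qed.

Lemma mkTD (R : realType) (n : nat) (g : geometry) (T : set (set 'rV[R]_(n.+1))) :
  tessellation g T -> TD (@Xspace R n g) T.
Proof.
move=> [Hpt [Hcov Hdisj]].
have Hrep : forall t, T t -> exists P, cone P /\ t = Xspace g `&` P /\
    forall v, Xspace g v -> ~ P v -> exists2 d, 0 < d &
       forall w, `|v - w| < d -> ~ P w.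
  move=> t Tt; have [[F [HF [_ [tE _]]]] _] := Hpt t Tt.
  pose P := [set v | forall S, F S -> forall u, S = halfspace_of g u -> 0 <= dotp u v].
  exists P; split; [split|split].
  - move=> a b Pa Pb S FS u SE; rewrite dotpD; apply: addr_ge0; [exact: (Pa S FS u SE)|exact: (Pb S FS u SE)].
  - move=> l a l0 Pa S FS u SE; rewrite dotpZ; apply: mulr_ge0; [exact: ltW|exact: (Pa S FS u SE)].
  - rewrite tE; apply/seteqP; split => v [Xv Hv]; split => //.
      move=> S FS u SE; have := Hv S FS; rewrite SE => -[_]; done.
    move=> S FS; have [H [_ [u [_ [_ [SE _]]]]]] := HF S FS.
    by rewrite SE; split => //; apply: Hv FS u SE.
  - move=> v Xv nPv.
    case: (pselect (exists S, F S /\ exists u, S = halfspace_of g u /\ dotp u v < 0));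
      last first.
      move=> H; exfalso; apply: nPv => S FS u SE.
      by rewrite leNgt; apply/negP => h; apply: H; exists S; split => //; exists u.
    move=> [S [FS [u [SE hu]]]].
    have hu' : 0 < - dotp u v by rewrite oppr_gt0.
    have cn : continuous (fun w : 'rV[R]_(n.+1) => - dotp u w).
      by move=> w; exact: (continuousN (@dotp_cont R n u w)).
    have [d d0 Hd] := @pos_near R _ _ v cn hu'.
    exists d => // w /Hd h Pw; have := Pw S FS u SE; move: h; rewrite oppr_gt0.
    by move=> h1 h2; move: (lt_le_trans h1 h2); rewrite ltxx.
split.
- by move=> t Tt; have [P [cP [tE _]]] := Hrep t Tt; exists P.
- move=> t Tt v Xv ntv; have [P [cP [tE Pcl]]] := Hrep t Tt.
  have nPv : ~ P v by move=> Pv; apply: ntv; rewrite tE.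
  have [d d0 Hd] := Pcl v Xv nPv.
  by exists d => // w /Hd h; rewrite tE => -[_].
- move=> t Tt; have [_ [a ia]] := Hpt t Tt; exists a; exact/intX_iff.
- move=> t1 t2 T1 T2 ne a i1 i2.
  have := Hdisj t1 t2 T1 T2 ne; rewrite -subset0 => /(_ a); apply.
  by split; apply/intX_iff.
Qed.

Lemma seq_min (R : realType) (A : eqType) (s : seq A) (Q : A -> R -> Prop) :
  (forall a d d', Q a d -> 0 < d' -> d' <= d -> Q a d') ->
  (forall a, a \in s -> exists2 d, 0 < d & Q a d) ->
  exists2 d, 0 < d & forall a, a \in s -> Q a d.
Proof.
move=> Hmon; elim: s => [|a s IH] H; first by exists 1.
have [d1 d10 H1] := H a (mem_head _ _).
have [d2 d20 H2] : exists2 d, 0 < d & forall b, b \in s -> Q b d.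
  by apply: IH => b bs; apply: H; rewrite in_cons bs orbT.
have m0 : 0 < minr d1 d2 by rewrite lt_min d10 d20.
exists (minr d1 d2) => // b; rewrite in_cons => /orP [/eqP ->|bs].
  by apply: Hmon H1 _ _ => //; rewrite ge_min lexx.
by apply: Hmon (H2 b bs) _ _ => //; rewrite ge_min lexx orbT.
Qed.

Lemma local_tiles (R : realType) (n : nat) (g : geometry)
  (T : set (set 'rV[R]_(n.+1))) (x : 'rV[R]_(n.+1)) :
  tessellation g T -> locally_finite_tess g T -> Xspace g x ->
  exists sx : seq (set 'rV[R]_(n.+1)),
    (forall t, t \in sx <-> T t /\ t x) /\
    exists2 r, 0 < r & forall w, Xspace g w -> `|x - w| < r ->
       exists2 t, t \in sx & t w.
Proof.
move=> Htess Hlf Xx.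
have TT := mkTD Htess.
have [_ [Hcov _]] := Htess.
have [sx sxE] : exists sx : seq (set 'rV[R]_(n.+1)),
    [set t | T t /\ (t `&` [set x]) !=set0] = [set` sx].
  apply/finite_seqP; apply: Hlf; first by move=> _ ->.
  exact: compact_set1.
exists sx; split.
  move=> t; have := congr1 (fun A => A t) sxE => /= <-.
  split; first by move=> [Tt [y [ty yx]]]; split => //; rewrite -yx.
  by move=> [Tt tx]; split => //; exists x.
pose K1 := Xspace g `&` [set w | `|x - w| <= 1].
have [s1 s1E] : exists s1 : seq (set 'rV[R]_(n.+1)),
    [set t | T t /\ (t `&` K1) !=set0] = [set` s1].
  apply/finite_seqP; apply: Hlf; first by move=> w [].
  apply: bounded_closed_compact.
    exists (`|x| + 1); split; first exact: num_real.
    move=> M hM w [_ hw] /=.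
    have := ler_normD x (w - x); rewrite [x + _]addrC subrK => h.
    have hw' : `|w - x| <= 1 by rewrite distrC; exact: hw.
    lra.
  apply: closedI; first exact: Xclosed.
  have -> : [set w | `|x - w| <= 1] = closed_ball_ normr x 1 by [].
  rewrite -closed_ballE //; exact: closed_ball_closed.
pose Q := fun (t : set 'rV[R]_(n.+1)) (d : R) => ~ t x -> forall w, `|x - w| < d -> ~ t w.
have Hmon : forall t e e', Q t e -> 0 < e' -> e' <= e -> Q t e'.
  move=> t e e' H e'0 e'e ntx w hw; apply: H => //; lra.
have Hex : forall t, t \in s1 -> exists2 d, 0 < d & Q t d.
  move=> t ts1.
  case: (pselect (t x)) => tx; first by exists 1.
  have Tt : T t.
    by move: ts1; have := congr1 (fun A => A t) s1E => /= <- [].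
  have [e e0 He] := tclosed TT Tt Xx tx.
  by exists e => // _.
have [d d0 Hd] := seq_min Hmon Hex.
exists (minr d 1); first by rewrite lt_min d0 ltr01.
move=> w Xw; rewrite lt_min => /andP [hwd hw1].
have [t Tt tw] := Hcov w Xw.
have ts1 : t \in s1.
  have := congr1 (fun A => A t) s1E => /= <-.
  by split => //; exists w; split => //; split => //; exact: ltW.
case: (pselect (t x)) => tx.
  exists t => //; have := congr1 (fun A => A t) sxE => /= <-.
  by split => //; exists x.
by exfalso; apply: (Hd t ts1 tx w hwd).
Qed.

Theorem lemma4p2 (R : realType) (n : nat) (g : geometry)
  (T : set (set 'rV[R]_(n.+1))) (x : 'rV[R]_(n.+1)) :
  tessellation g T -> locally_finite_tess g T -> Xspace g x ->
  let C := \bigcap_(t in [set t | T t /\ t x]) t in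
  cell g T C /\ rel_interior g C x.
Proof.
move=> Htess Hlf Xx C.
have TT := mkTD Htess.
have [G _] := geomGD R n g.
have [sx [Hsx [r r0 Hnb]]] := local_tiles Htess Hlf Xx.
have Hsx' : forall t, t \in sx -> T t /\ t x by move=> t /Hsx.
have CE : forall c, C c <-> (forall t, t \in sx -> t c).
  move=> c; split; first by move=> Cc t /Hsx ht; apply: Cc.
  by move=> H t /Hsx ht; apply: H.
have Cx : C x by apply/CE => t /Hsx [].
have [_ [Hcov _]] := Htess.
have CX : forall c, C c -> Xspace g c.
  move=> c Cc; have [t Tt tx] := Hcov x Xx.
  exact: (tileX TT Tt (Cc t (conj Tt tx))).
have hull1 : forall w, tg_hull g C w ->
    forall L : {vspace 'rV[R]_(n.+1)},
      (forall c, (forall t, t \in sx -> t c) -> c \in L) -> w \in L.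
  move=> w [Xw Hw] L HL.
  have M1 : tg_submanifold g (Xspace g `&` [set v | v \in L]).
    exists L; split => //; exists x; split => //; apply: HL; exact/CE.
  have := Hw _ M1; case.
    by move=> c Cc; split; [exact: CX | apply: HL; exact/CE].
  by [].
have hull2 : forall w, Xspace g w ->
    (forall L : {vspace 'rV[R]_(n.+1)},
      (forall c, (forall t, t \in sx -> t c) -> c \in L) -> w \in L) ->
    tg_hull g C w.
  move=> w Xw H; split => // M [L [ME _]] CM.
  rewrite ME; split => //; apply: H => c hc.
  by have := CM c (proj2 (CE c) hc); rewrite ME => -[].
split; last first.
  split => //; exists r; split => // w [/ballN hw hw2].
  have Xw : Xspace g w by case: hw2.
  apply/CE; apply: (partA G TT Hsx' r0 Hnb Xx Xw hw); exact: hull1.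
split.
  exists [set t | T t /\ t x]; split; first by move=> t [].
  by split => //; have [t Tt tx] := Hcov x Xx; exists t.
split; first by exists x.
move=> t Tt; case: (pselect (t x)) => tx.
  by left => c Cc; apply: Cc.
right; apply/seteqP; split => // y [[Cy [e [e0 He]]] ty]; exfalso; apply: tx.
apply: (partB G TT Hsx' r0 Hnb Xx Tt ty (proj1 (CE y) Cy) e0).
move=> w Xw hw Hl; apply/CE; apply: He; split; first exact/ballN.
exact: hull2.
Qed.
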